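(* Let $\mu\in\mathcal P_c^*(\mathbb R^2)$. Then $\mathcal N_{\mathrm m}[\mu]\in L^\infty_\rho(\mathbb R)$.
   Context: $\mathbb S_1=\{x\in\mathbb R^2:\|x\|=1\}$; $\mathcal R_\theta[\mu]=(\langle\cdot,\theta\rangle)_\#\mu$. Fix a reference Borel probability measure $\rho$ on $\mathbb R$ without atoms. For a probability measure $\nu$ on $\mathbb R$ with $F_\nu(t)=\nu((-\infty,t])$, $F_\nu^{[-1]}(t)=\inf\{s:F_\nu(s)>t\}$ and the CDT is $\hat\nu=F_\nu^{[-1]}\circ F_\rho$; $\widehat{\mathcal R}_\theta[\mu]$ is the CDT of $\mathcal R_\theta[\mu]$. For $g\in L^2_\rho(\mathbb R)$, $\operatorname{mean}(g)=\int g\,\mathrm d\rho$, $\operatorname{std}(g)=(\int|g-\operatorname{mean}(g)|^2\mathrm d\rho)^{1/2}$. $\mathcal P_c^*(\mathbb R^2)$ is the set of compactly supported Borel probability measures on $\mathbb R^2$ whose support has affine hull of dimension $>1$. For such $\mu$: $\mathcal N_\theta[\mu](t)=\big(\widehat{\mathcal R}_\theta[\mu](t)-\operatorname{mean}(\widehat{\mathcal R}_\theta[\mu])\big)/\operatorname{std}(\widehat{\mathcal R}_\theta[\mu])$ and the max-normalized R-CDT is $\mathcal N_{\mathrm m}[\mu](t)=\sup_{\theta\in\mathbb S_1}\mathcal N_\theta[\mu](t)$, $t\in\mathbb R$. *)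

(* Defs.v *)
From HB Require Import structures.
From mathcomp Require Import all_boot all_order all_algebra.
From mathcomp Require Import all_classical all_reals all_analysis measurable_realfun.
Set Implicit Arguments. Unset Strict Implicit. Unset Printing Implicit Defensive.
Import Order.TTheory GRing.Theory Num.Theory.
Import numFieldNormedType.Exports.
Local Open Scope classical_set_scope.
Local Open Scope ring_scope.

Section Defs.
Variable R : realType.

(* Points of R^2 are pairs; R * R carries the product (= Borel) sigma-algebra. *)
Definition dot2 (x y : R * R) : R := x.1 * y.1 + x.2 * y.2.

Definition S1 : set (R * R) := [set th | th.1 ^+ 2 + th.2 ^+ 2 = 1].

Definition supp2 (mu : set (R * R) -> \bar R) : set (R * R) :=
  [set x | forall e : R, 0 < e ->
     (0%E < mu [set y | `|y.1 - x.1| < e /\ `|y.2 - x.2| < e])%O].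

(* affine hull of A has dimension <= 1  iff  A lies in an affine line *)
Definition in_affine_line (A : set (R * R)) : Prop :=
  exists (a : R * R) (c : R), a != (0, 0) /\ A `<=` [set x | dot2 a x = c].

Definition Pc_star (mu : probability (R * R)%type R) : Prop :=
  compact (supp2 mu) /\ ~ in_affine_line (supp2 mu).

(* CDF of the pushforward R_theta[mu] = (<.,theta>)_# mu *)
Definition cdf_radon (mu : probability (R * R)%type R) (th : R * R) (t : R) : R :=
  fine (mu ((fun x => dot2 x th) @^-1` [set` `]-oo, t]%R])).

Definition cdf (nu : set R -> \bar R) (t : R) : R := fine (nu [set` `]-oo, t]%R]).

Definition gen_inv (F : R -> R) (s : R) : R := inf [set u | s < F u].

Definition cdt_radon (rho : probability R R) (mu : probability (R * R)%type R)
  (th : R * R) (t : R) : R := gen_inv (cdf_radon mu th) (cdf rho t).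

Definition meanr (rho : probability R R) (g : R -> R) : R :=
  fine (\int[rho]_t (g t)%:E).

Definition stdr (rho : probability R R) (g : R -> R) : R :=
  Num.sqrt (fine (\int[rho]_t ((g t - meanr rho g) ^+ 2)%:E)).

Definition N_theta (rho : probability R R) (mu : probability (R * R)%type R)
  (th : R * R) (t : R) : R :=
  (cdt_radon rho mu th t - meanr rho (cdt_radon rho mu th))
    / stdr rho (cdt_radon rho mu th).

Definition N_max (rho : probability R R) (mu : probability (R * R)%type R)
  (t : R) : \bar R :=
  ereal_sup [set (N_theta rho mu th t)%:E | th in S1].

Definition in_Linfty (rho : probability R R) (f : R -> \bar R) : Prop :=
  measurable_fun [set: R] f /\
  exists C : R, {ae rho, forall t, (abse (f t) <= C%:E)%O}.

End Defs.

(* Main.v *)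
Require Import Defs.
From HB Require Import structures.
From mathcomp Require Import all_boot all_order all_algebra.
From mathcomp Require Import all_classical all_reals all_analysis measurable_realfun.
From mathcomp Require Import ring lra.
Import Order.TTheory GRing.Theory Num.Theory.
Import numFieldNormedType.Exports.
Local Open Scope classical_set_scope.
Local Open Scope ring_scope.
Section GenInv.
Variable R : realType.
Variables (F : R -> R) (K : R).
Hypothesis F0 : forall u, u < - K -> F u = 0.
Hypothesis F1 : forall u, K <= u -> F u = 1.
Hypothesis Fle1 : forall u, F u <= 1.
Hypothesis K0 : 0 < K.

Lemma gen_inv_ge1 s : 1 <= s -> gen_inv F s = 0.
Proof.
move=> s1; rewrite /gen_inv (_ : [set u | s < F u] = set0) ?inf0 //.
apply/seteqP; split => u //= /lt_le_trans/(_ (Fle1 u)); rewrite ltNge s1 //.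
Qed.

Lemma gen_inv_lb s : 0 <= s -> has_lbound [set u | s < F u].
Proof.
move=> s0; exists (- K) => u /= su; rewrite leNgt; apply/negP => uK.
by move: su; rewrite F0 // ltNge s0.
Qed.

Lemma gen_inv_ne s : s < 1 -> [set u | s < F u] !=set0.
Proof. by move=> s1; exists K; rewrite /= F1. Qed.

Lemma gen_inv_bound s : 0 <= s -> `|gen_inv F s| <= K.
Proof.
move=> s0; have [s1|s1] := leP 1 s; first by rewrite gen_inv_ge1 // normr0 ltW.
rewrite ler_norml; apply/andP; split.
  apply: lb_le_inf; first exact: gen_inv_ne.
  by move=> u /= su; rewrite leNgt; apply/negP => uK; move: su; rewrite F0 // ltNge s0.
by move: (ge_inf (gen_inv_lb _ s0)) => /(_ K); apply; rewrite /= F1.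
Qed.

Lemma gen_inv_mono s1 s2 : 0 <= s1 -> s1 <= s2 -> s2 < 1 -> gen_inv F s1 <= gen_inv F s2.
Proof.
move=> s10 s12 s21; apply: lb_le_inf; first exact: gen_inv_ne.
move=> u /= su; move: (ge_inf (gen_inv_lb _ s10)) => /(_ u); apply => /=.
exact: le_lt_trans su.
Qed.

Lemma gen_inv_le s a : 0 <= s -> s < F a -> gen_inv F s <= a.
Proof. by move=> s0 sa; move: (ge_inf (gen_inv_lb _ s0)) => /(_ a); apply. Qed.

Lemma gen_inv_ge s b : s < 1 -> (forall u, u < b -> F u <= s) -> b <= gen_inv F s.
Proof.
move=> s1 hb; apply: lb_le_inf; first exact: gen_inv_ne.
by move=> u /= su; rewrite leNgt; apply/negP => /hb; rewrite leNgt su.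
Qed.
End GenInv.
Section Quantile.
Variable R : realType.
Variable rho : probability R R.
Hypothesis rho_no_atoms : forall x : R, rho [set x] = 0%E.

Local Notation Fr := (Defs.cdf rho).

Lemma FrE (t : R) : rho `]-oo, t]%classic = (Fr t)%:E.
Proof. by rewrite /Defs.cdf fineK // fin_num_measure. Qed.

Lemma Fr_ge0 t : 0 <= Fr t.
Proof. by rewrite /Defs.cdf fine_ge0. Qed.

Lemma Fr_le1 t : Fr t <= 1.
Proof.
by rewrite -lee_fin -FrE probability_le1.
Qed.

Lemma Fr_mono : {homo Fr : x y / x <= y}.
Proof.
move=> x y xy; rewrite -lee_fin -!FrE le_measure ?inE //.
by apply: subset_itvl; rewrite bnd_simp.
Qed.

Lemma Fr_small e : 0 < e -> exists t, Fr t < e.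
Proof.
move=> e0; apply/not_existsP => /= hall.
pose G n := `]-oo, (- n%:R)%R]%classic : set R.
have hG : rho \o G @ \oo --> rho (\bigcap_n G n).
  apply: nonincreasing_cvg_mu.
  - by apply: (le_lt_trans (probability_le1 _ _)); [exact: measurable_itv|exact: ltry].
  - by move=> i; exact: measurable_itv.
  - by apply: bigcap_measurable => // i _; exact: measurable_itv.
  - move=> m n mn; apply/subsetPset => x; rewrite /G /= !in_itv /= => /le_trans; apply.
    by rewrite lerN2 ler_nat.
have EG : \bigcap_n G n = set0.
  apply/seteqP; split => // t /= ht.
  have := ht (Num.bound (`|t|)) I; rewrite /G /= in_itv /= => htb.
  have h2 := archi_boundP (normr_ge0 t).
  have h3 : - t <= `|t| by rewrite -normrN ler_norm.
  have hb : (Num.bound `|t|)%:R <= - t by rewrite lerNr.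
  by have := le_lt_trans (le_trans hb h3) h2; rewrite ltxx.
rewrite EG measure0 in hG.
have : (e%:E <= lim (rho \o G @ \oo))%E.
  apply: lime_ge; first by apply/cvg_ex; exists 0%E.
  by near=> n; rewrite /= /G FrE lee_fin leNgt; apply/negP; apply: hall.
by rewrite (cvg_lim _ hG) // lee_fin leNgt e0.
Unshelve. all: by end_near.
Qed.

Lemma Fr_large e : e < 1 -> exists t, e < Fr t.
Proof.
move=> e1; apply/not_existsP => /= hall.
pose G n := `]-oo, (n%:R : R)]%classic : set R.
have hG : rho \o G @ \oo --> rho (\bigcup_n G n).
  apply: nondecreasing_cvg_mu.
  - by move=> i; exact: measurable_itv.
  - by apply: bigcup_measurable => i _; exact: measurable_itv.
  - move=> m n mn; apply/subsetPset => x; rewrite /G /= !in_itv /= => /le_trans; apply.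
    by rewrite ler_nat.
have EG : \bigcup_n G n = setT.
  rewrite -subTset => t _; exists (Num.bound (`|t|)) => //.
  rewrite /G/= in_itv/=; apply: ltW; apply: le_lt_trans (archi_boundP (normr_ge0 t)).
  exact: ler_norm.
rewrite EG probability_setT in hG.
have : (lim (rho \o G @ \oo) <= e%:E)%E.
  apply: lime_le; first by apply/cvg_ex; exists 1%E.
  by near=> n; rewrite /= /G FrE lee_fin leNgt; apply/negP; apply: hall.
by rewrite (cvg_lim _ hG) // lee_fin leNgt e1.
Unshelve. all: by end_near.
Qed.

Lemma Fr_quantile l : 0 < l -> l < 1 -> exists t, Fr t = l.
Proof.
move=> l0 l1.
pose A := [set t | Fr t <= l].
have [ta hta] := Fr_small _ l0.
have [tb htb] := Fr_large _ l1.
have Ane : A !=set0 by exists ta; rewrite /A /= ltW.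
have Aub : ubound A tb.
  move=> a /= ha; rewrite leNgt; apply/negP => ab.
  by move: (Fr_mono _ _ (ltW ab)); rewrite leNgt (le_lt_trans ha htb).
have hsA : has_sup A by split => //; exists tb.
pose t0 := sup A.
exists t0; apply/eqP; rewrite eq_le; apply/andP; split.
-
  pose G n := `]-oo, (t0 - n.+1%:R^-1)]%classic : set R.
  have hG : rho \o G @ \oo --> rho (\bigcup_n G n).
    apply: nondecreasing_cvg_mu.
    - by move=> i; exact: measurable_itv.
    - by apply: bigcup_measurable => i _; exact: measurable_itv.
    - move=> m n mn; apply/subsetPset => x; rewrite /G /= !in_itv /= => /le_trans; apply.
      by rewrite lerD2l lerN2 lef_pV2 ?posrE // ler_nat.
  have EG : \bigcup_n G n = `]-oo, t0[%classic.
    apply/seteqP; split => [t [n _]|t].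
      rewrite /G /= !in_itv /= => /le_lt_trans; apply.
      by rewrite ltrBlDr ltrDl invr_gt0.
    rewrite /= in_itv /= => /ltr_add_invr [k hk]; exists k => //.
    by rewrite /G /= in_itv /= lerBrDr ltW.
  rewrite EG in hG.
  have h1 : (lim (rho \o G @ \oo) <= l%:E)%E.
    apply: lime_le; first exact: (cvgP _ hG).
    near=> n; rewrite /= /G FrE lee_fin.
    have hlt : t0 - n.+1%:R^-1 < sup A by rewrite /t0 ltrBlDr ltrDl invr_gt0.
    have [a Aa ha] := sup_gt Ane hlt.
    exact: le_trans (Fr_mono _ _ (ltW ha)) Aa.
  rewrite (cvg_lim _ hG) // in h1.
  rewrite -lee_fin -FrE -(@setUitv1 _ _ _ t0 true) ?bnd_simp //.
  rewrite measureU //=; last first.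
    by apply/seteqP; split => // t [] /=; rewrite in_itv /= => + tt0; rewrite tt0 ltxx.
  by rewrite rho_no_atoms adde0.
-
  pose G n := `]-oo, (t0 + n.+1%:R^-1)]%classic : set R.
  have hG : rho \o G @ \oo --> rho (\bigcap_n G n).
    apply: nonincreasing_cvg_mu.
    - by apply: (le_lt_trans (probability_le1 _ _)); [exact: measurable_itv|exact: ltry].
    - by move=> i; exact: measurable_itv.
    - by apply: bigcap_measurable => // i _; exact: measurable_itv.
    - move=> m n mn; apply/subsetPset => x; rewrite /G /= !in_itv /= => /le_trans; apply.
      by rewrite lerD2l lef_pV2 ?posrE // ler_nat.
  rewrite -(itvNycEbigcap false) in hG.
  have h1 : (l%:E <= lim (rho \o G @ \oo))%E.
    apply: lime_ge; first exact: (cvgP _ hG).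
    near=> n; rewrite /= /G FrE lee_fin leNgt; apply/negP => hlt.
    have : A (t0 + n.+1%:R^-1) by rewrite /A /= ltW.
    move/(ub_le_sup (proj2 hsA)); rewrite -/t0 leNgt => /negP; apply.
    by rewrite ltrDl invr_gt0.
  by rewrite (cvg_lim _ hG) // FrE lee_fin in h1.
Unshelve. all: by end_near.
Qed.
End Quantile.
HB.saturate prod.
Section SuppNull.
Variable R : realType.
Variable mu : probability (R * R)%type R.

Lemma meas_abs_lt (c e : R) : measurable [set y : R | `|y - c| < e].
Proof.
have -> : [set y : R | `|y - c| < e] = `]c - e, c + e[%classic.
  by apply/seteqP; split => y; rewrite /= in_itv /= ltr_distl.
exact: measurable_itv.
Qed.

Definition sq (x : R * R) (e : R) : set (R * R) :=
  [set y | `|y.1 - x.1| < e /\ `|y.2 - x.2| < e].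

Lemma meas_sq x e : measurable (sq x e).
Proof.
have -> : sq x e = [set y : R | `|y - x.1| < e] `*` [set y : R | `|y - x.2| < e].
  by apply/seteqP; split => y.
by apply: measurableX; exact: meas_abs_lt.
Qed.

Lemma ball2E (x y : R * R) e :
  ball x e y = (`|x.1 - y.1| < e /\ `|x.2 - y.2| < e).
Proof. by []. Qed.

Lemma supp_null : compact (supp2 mu) -> exists M : R, 0 < M /\
  (forall x, supp2 mu x -> `|x.1| < M /\ `|x.2| < M) /\
  mu.-negligible [set x | ~ (`|x.1| < M /\ `|x.2| < M)].
Proof.
move=> cpt.
have [M0 [_ HM]] := compact_bounded cpt.
pose M := `|M0| + 2.
have M0M : M0 < `|M0| + 1 by apply: le_lt_trans (ler_norm _) _; rewrite ltrDl.
have hsupp : forall x, supp2 mu x -> `|x.1| < M /\ `|x.2| < M.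
  move=> x sx; have := HM _ M0M x sx.
  move=> /= hx; have : Num.max `|x.1| `|x.2| <= `|M0| + 1 by exact: hx.
  rewrite ge_max => /andP [h1 h2].
  by split; apply: le_lt_trans; [exact: h1| |exact: h2|]; rewrite /M ltrD2l ltr1n.
have M0' : 0 < M by rewrite /M ltr_wpDl.
exists M; split => //; split => //.
pose O := [set y : R * R | `|y.1| < M /\ `|y.2| < M].
have Oopen : open O.
  have -> : O = ball (0 : R * R) M.
    by apply/seteqP; split => y; rewrite ball2E /O /= !sub0r !normrN.
  exact: ball_open.
have hnb : forall x, exists e : R, (~ supp2 mu x -> 0 < e) /\ mu.-negligible (ball x e).
  move=> x; case: (pselect (supp2 mu x)) => sx.
    exists 0; split => //; exists set0; split => // y.
    by rewrite ball2E ltNge normr_ge0 => -[].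
  have [e /not_implyP [e0 he]] : exists e : R, ~ (0 < e -> (0%E < mu (sq x e))%O).
    by apply/existsNP.
  exists e; split => // ; exists (sq x e); split.
  - exact: meas_sq.
  - apply/eqP; rewrite eq_le measure_ge0 andbT leNgt; exact/negP.
  - by move=> y; rewrite ball2E => -[h1 h2]; split; rewrite distrC.
have [ef hef] := choice hnb.
pose f x := O `|` ball x (ef x).
pose B (n : nat) := (`[- (n%:R : R), n%:R] `*` `[- (n%:R : R), n%:R])%classic.
have nB : forall n, mu.-negligible (B n `\` O).
  move=> n.
  have cB : compact (B n) by apply: compact_setX; exact: segment_compact.
  have cB' : cover_compact (B n) by rewrite -compact_cover.
  have hcov : B n `<=` cover (B n) f.
    move=> x Bx; exists x => //; rewrite /f.
    case: (pselect (supp2 mu x)) => sx; [left; exact: hsupp|right].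
    by apply: ballxx; apply: (hef x).1.
  have [D' _ hD'] := cB' _ (B n) f (fun i _ => openU Oopen (ball_open _ _)) hcov.
  rewrite /cover bigcup_fset in hD'.
  have hL : forall l, mu.-negligible ((\big[setU/set0]_(i <- l) f i) `\` O).
    elim => [|a l IH].
      by rewrite big_nil set0D; exact: negligible_set0.
    apply: (negligibleS _ (negligibleU (hef a).2 IH)).
    rewrite big_cons => y [[[//|ba]|hl] nOy]; [by left|by right].
  apply: (negligibleS _ (hL (finmap.enum_fset D'))).
  by move=> y [By nOy]; split => //; apply: hD'.
  
apply: (negligibleS _ (negligible_bigcup nB)).
move=> y /= hy; exists (Num.bound (`|y.1| + `|y.2|)) => //; split => //.
have hb := archi_boundP (addr_ge0 (normr_ge0 y.1) (normr_ge0 y.2)).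
split; rewrite /= in_itv /= -ler_norml; apply: ltW; apply: le_lt_trans hb.
  by rewrite lerDl.
by rewrite lerDr.
Qed.
End SuppNull.
Arguments sq {R}.
Section Radon.
Variable R : realType.
Variable mu : probability (R * R)%type R.

Lemma meas_dot (th : R * R) : measurable_fun setT (fun x : R * R => dot2 x th).
Proof.
rewrite /dot2; apply: measurable_funD; apply: measurable_funM;
  (exact: measurable_fst || exact: measurable_snd || exact: measurable_cst).
Qed.

Lemma meas_pre (th : R * R) (t : R) :
  measurable ((fun x => dot2 x th) @^-1` `]-oo, t]%classic).
Proof.
rewrite -[X in measurable X]setTI; exact: (meas_dot th measurableT _ (measurable_itv `]-oo, t])).


Qed.

Lemma S1_bound (th : R * R) : S1 th -> `|th.1| <= 1 /\ `|th.2| <= 1.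
Proof.
rewrite /S1 /= => h; split; rewrite ler_norml; apply/andP; split; nra.
Qed.

Lemma norm_mul_le1 (a b : R) : `|b| <= 1 -> `|a * b| <= `|a|.
Proof. by move=> hb; rewrite normrM ler_piMr. Qed.

Lemma dot_sub (th P y : R * R) :
  dot2 y th - dot2 P th = (y.1 - P.1) * th.1 + (y.2 - P.2) * th.2.
Proof. rewrite /dot2; ring. Qed.

Lemma dot_sq (th P : R * R) (r : R) (y : R * R) : S1 th -> sq P r y -> `|dot2 y th - dot2 P th| < 2 * r.
Proof.
move=> /S1_bound [h1 h2] [y1 y2]; rewrite dot_sub.
apply: le_lt_trans (ler_normD _ _) _.
have := norm_mul_le1 (y.1 - P.1) _ h1; have := norm_mul_le1 (y.2 - P.2) _ h2.
move=> a b; have := ltrD (le_lt_trans b y1) (le_lt_trans a y2).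
lra.
Qed.

Lemma dot_in (th x : R * R) (M : R) : S1 th -> `|x.1| < M -> `|x.2| < M -> `|dot2 x th| < 2 * M.
Proof.
move=> hth h1 h2.
have := @dot_sq th (0, 0) M x hth; rewrite /sq /= !subr0 => /(_ (conj h1 h2)).
by rewrite /dot2 /= !mul0r addr0 subr0.
Qed.

Lemma radon_fin (th : R * R) (t : R) : mu ((fun x => dot2 x th) @^-1` `]-oo, t]%classic) = (cdf_radon mu th t)%:E.
Proof. by rewrite /cdf_radon fineK // fin_num_measure //; apply: meas_pre. Qed.

Lemma radon_ge0 (th : R * R) (t : R) : 0 <= cdf_radon mu th t.
Proof. by rewrite /cdf_radon fine_ge0. Qed.

Lemma radon_le1 (th : R * R) (t : R) : cdf_radon mu th t <= 1.
Proof. by rewrite -lee_fin -radon_fin probability_le1 //; apply: meas_pre. Qed.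

Variable M : R.
Hypothesis M0 : 0 < M.
Hypothesis hN : mu.-negligible [set x | ~ (`|x.1| < M /\ `|x.2| < M)].

Lemma radon_lo (th : R * R) (u : R) : S1 th -> u < - (2 * M) -> cdf_radon mu th u = 0.
Proof.
move=> hth hu; have [B [mB mB0 NB]] := hN.
apply/eqP; rewrite eq_le radon_ge0 andbT -lee_fin -radon_fin.
apply: (@le_trans _ _ (mu B)); last by rewrite mB0.
apply: le_measure; rewrite ?inE //; first exact: meas_pre.
move=> x /=; rewrite in_itv /= => hx; apply: NB => -[h1 h2].
have := dot_in _ _ _ hth h1 h2; rewrite ltr_norml => /andP [h3 _].
by have := lt_trans h3 (le_lt_trans hx hu); rewrite ltxx.
Qed.

Lemma radon_hi (th : R * R) (u : R) : S1 th -> 2 * M <= u -> cdf_radon mu th u = 1.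
Proof.
move=> hth hu; have [B [mB mB0 NB]] := hN.
set A := (fun x => dot2 x th) @^-1` `]-oo, u]%classic.
have hC : mu (~` A) = 0%E.
  apply/eqP; rewrite eq_le measure_ge0 andbT.
  apply: (@le_trans _ _ (mu B)); last by rewrite mB0.
  apply: le_measure; rewrite ?inE //; first by apply: measurableC; exact: meas_pre.
  move=> x hx; apply: NB => -[h1 h2]; apply: hx; rewrite /A /= in_itv /=.
  have := dot_in _ _ _ hth h1 h2; rewrite ltr_norml => /andP [_ h3].
  exact: ltW (lt_le_trans h3 hu).
have := probability_setC mu (measurableC (meas_pre th u)).
by rewrite setCK hC sube0 radon_fin => -[].
Qed.

End Radon.
Ltac rhoT := rewrite integral_cst //; match goal with |- context[(?k * _)%E] =>
  rewrite (_ : (k * _)%E = k); [|rewrite -[RHS]mule1; congr (_ * _)%E; exact: probability_setT] end.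

Section Std.
Variable R : realType.
Variable rho : probability R R.

Lemma mean_bound (g : R -> R) (K : R) : measurable_fun setT g ->
  (forall t, `|g t| <= K) -> `|meanr rho g| <= K.
Proof.
move=> mg hK.
have K0 : 0 <= K by apply: le_trans (hK 0).
have h : (`|\int[rho]_t (g t)%:E| <= K%:E)%E.
  apply: le_trans (le_abse_integral _ _ _) _ => //.
    by apply/measurable_EFinP.
  apply: le_trans (_ : (\int[rho]_t (cst K%:E) t <= _)%E).
    apply: ge0_le_integral => //.
    - apply: measurableT_comp => //; by apply/measurable_EFinP.
    - by move=> t _ /=; rewrite lee_fin.
  by rhoT.
rewrite /meanr; move: h; case: (\int[rho]_t (g t)%:E)%E => [r||] //=; by rewrite normr0.
Qed.

Lemma std_lb (g : R -> R) (K a b p : R) (G H : set R) :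
  measurable_fun setT g -> (forall t, `|g t| <= K) ->
  measurable G -> measurable H -> (p%:E <= rho G)%E -> (p%:E <= rho H)%E ->
  0 <= p -> a <= b -> (forall t, G t -> g t <= a) -> (forall t, H t -> b <= g t) ->
  Num.sqrt (((b - a) / 2) ^+ 2 * p) <= stdr rho g.
Proof.
move=> mg hK mG mH pG pH p0 ab hG hH.
rewrite /stdr; apply: ler_wsqrtr.
set c := meanr rho g.
have hc : `|c| <= K by exact: mean_bound.
set f := fun t => ((g t - c) ^+ 2)%:E.
have mf : measurable_fun setT f.
  apply/measurable_EFinP; apply: measurable_funX; apply: measurable_funB => //.
have f0 : forall t, (0 <= f t)%E by move=> t; rewrite lee_fin sqr_ge0.
set I := (\int[rho]_t ((g t - c) ^+ 2)%:E)%E.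
have Iub : (I <= ((K + K) ^+ 2)%:E)%E.
  apply: le_trans (_ : (\int[rho]_t (cst ((K + K) ^+ 2)%:E) t <= _)%E).
    apply: ge0_le_integral => //; first by move=> t _; exact: f0.
    move=> t _ /=; rewrite lee_fin.
    have := hK t; rewrite ler_norml => /andP [h1 h2].
    move: hc; rewrite ler_norml => /andP [h3 h4].
    have e1 : 0 <= K + K - (g t - c) by lra.
    have e2 : 0 <= K + K + (g t - c) by lra.
    have := mulr_ge0 e1 e2; nra.
  by rhoT.
have Ige0 : (0 <= I)%E by apply: integral_ge0 => t _; exact: f0.
set k := ((b - a) / 2) ^+ 2.
have k0 : 0 <= k by rewrite sqr_ge0.
have Ilb : ((k * p)%:E <= I)%E.
  have hsub : forall S : set R, measurable S -> (forall t, S t -> k <= (g t - c) ^+ 2) ->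
      (p%:E <= rho S)%E -> ((k * p)%:E <= I)%E.
    move=> S mS hS pS.
    apply: le_trans (_ : (\int[rho]_(t in S) f t <= I)%E); last first.
      by apply: ge0_subset_integral => //.
    apply: le_trans (_ : (\int[rho]_(t in S) (cst k%:E) t <= _)%E); last first.
      apply: ge0_le_integral => //; first exact: (measurable_funS measurableT (subsetT _) mf).
      all: try by move=> t St; rewrite /f lee_fin hS.
    rewrite integral_cst // EFinM.
    by apply: lee_pmul => //; rewrite lee_fin.
  have [hcab|hcab] := leP ((a + b) / 2) c.
    apply: (hsub G) => // t Gt; have := hG t Gt; rewrite /k.
    move=> h; nra.
  apply: (hsub H) => // t Ht; have := hH t Ht; rewrite /k.
  move=> h; nra.
have Ifin : I = (fine I)%:E.
  by rewrite fineK // ge0_fin_numE // (le_lt_trans Iub) // ltry.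
by move: Ilb; rewrite Ifin lee_fin.
Qed.
End Std.
Section Geom.
Variable R : realType.

Lemma abs_sum_ge1 (th : R * R) : S1 th -> 1 <= `|th.1| + `|th.2|.
Proof.
rewrite /S1 /= => h.
have e1 := real_normK (num_real th.1); have e2 := real_normK (num_real th.2).
have n1 := normr_ge0 th.1; have n2 := normr_ge0 th.2.
nra.
Qed.

Lemma sep (u v th : R * R) : S1 th ->
  `|u.1 * v.2 - u.2 * v.1| <=
  (`|u.1| + `|u.2| + `|v.1| + `|v.2|) * (`|dot2 u th| + `|dot2 v th|).
Proof.
move=> hth; set d := u.1 * v.2 - u.2 * v.1.
set du := dot2 u th; set dv := dot2 v th.
have E1 : th.1 * d = v.2 * du - u.2 * dv by rewrite /d /du /dv /dot2; ring.
have E2 : th.2 * d = u.1 * dv - v.1 * du by rewrite /d /du /dv /dot2; ring.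
have B1 : `|th.1| * `|d| <= `|v.2| * `|du| + `|u.2| * `|dv|.
  by rewrite -normrM E1 -!normrM; apply: ler_normB.
have B2 : `|th.2| * `|d| <= `|u.1| * `|dv| + `|v.1| * `|du|.
  by rewrite -normrM E2 -!normrM; apply: ler_normB.
have := abs_sum_ge1 _ hth.
have := normr_ge0 d; have := normr_ge0 du; have := normr_ge0 dv.
have := normr_ge0 u.1; have := normr_ge0 u.2; have := normr_ge0 v.1; have := normr_ge0 v.2.
nra.
Qed.

Lemma three_points (A : set (R * R)) : ~ in_affine_line A ->
  exists p1 p2 p3 : R * R, [/\ A p1, A p2, A p3 &
    (p2.1 - p1.1) * (p3.2 - p1.2) - (p2.2 - p1.2) * (p3.1 - p1.1) != 0].
Proof.
move=> hnl.
have [p1 A1] : exists p, A p.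
  apply/not_existsP => hne; apply: hnl; exists (1, 0), 0; split.
    by apply/eqP => -[] /eqP; rewrite oner_eq0.
  by move=> x Ax; exfalso; exact: hne x Ax.
have [p2 [A2 h2]] : exists p, A p /\ p.1 != p1.1.
  apply/not_existsP => hne; apply: hnl; exists (1, 0), p1.1; split.
    by apply/eqP => -[] /eqP; rewrite oner_eq0.
  move=> x Ax /=; rewrite /dot2 /= mul1r mul0r addr0.
  by apply: contrapT => hx; apply: (hne x); split => //; apply/eqP.
set a := (- (p2.2 - p1.2), p2.1 - p1.1).
have [p3 [A3 h3]] : exists p, A p /\ dot2 a p != dot2 a p1.
  apply/not_existsP => hne; apply: hnl; exists a, (dot2 a p1); split.
    by apply/eqP => -[_] /eqP; rewrite subr_eq0 (negPf h2).
  move=> x Ax /=.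
  by apply: contrapT => hx; apply: (hne x); split => //; apply/eqP.
exists p1, p2, p3; split => //.
move: h3; rewrite /dot2 /a /=; apply: contra => /eqP h; apply/eqP.
by apply/eqP; rewrite -subr_eq0 -h; apply/eqP; ring.
Qed.

End Geom.
Section SqMass.
Variable R : realType.
Variable mu : probability (R * R)%type R.

Lemma radon_ge_sq (th P : R * R) (r m : R) : S1 th -> (m%:E <= mu (sq P r))%E ->
  m <= cdf_radon mu th (dot2 P th + 2 * r).
Proof.
move=> hth hm; rewrite -lee_fin -radon_fin; apply: le_trans hm _.
apply: le_measure; rewrite ?inE; [exact: meas_sq|exact: meas_pre|].
move=> y hy; rewrite /= in_itv /=.
have := @dot_sq R th P r y hth hy; rewrite ltr_norml => /andP [_ h].
lra.
Qed.

Lemma radon_le_sq (th Q : R * R) (r m u : R) : S1 th -> (m%:E <= mu (sq Q r))%E ->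
  u < dot2 Q th - 2 * r -> cdf_radon mu th u <= 1 - m.
Proof.
move=> hth hm hu; rewrite -lee_fin -radon_fin.
have hA : (fun x => dot2 x th) @^-1` `]-oo, u]%classic `<=` ~` sq Q r.
  move=> y; rewrite /= in_itv /= => hy hsq.
  have := @dot_sq R th Q r y hth hsq; rewrite ltr_norml => /andP [h _].
  clear hm; lra.
apply: (@le_trans _ _ (mu (~` sq Q r))).
  apply: le_measure hA; rewrite ?inE; [exact: meas_pre|].
  by apply: measurableC; exact: meas_sq.
rewrite probability_setC; last exact: meas_sq.
have hs : mu (sq Q r) = (fine (mu (sq Q r)))%:E.
  by rewrite fineK // fin_num_measure //; exact: meas_sq.
rewrite hs -EFinB lee_fin; move: hm; rewrite hs lee_fin; lra.
Qed.
End SqMass.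

Section MonoMeas.
Variable R : realType.

Lemma mono_on_measurable (D : set R) (f : R -> R) (c : R) :
  measurable D -> is_interval D ->
  (forall x y, D x -> D y -> x <= y -> f x <= f y) ->
  (forall x, ~ D x -> f x = c) -> measurable_fun setT f.
Proof.
move=> mD iD fmono fc.
rewrite -(setUv D); apply/measurable_funU => //; first exact: measurableC.
split.
  apply: (measurability (@RGenCInfty.G R)) => [|/= _ [_] [r] -> <-].
    exact: RGenCInfty.measurableE.
  apply: is_interval_measurable => x y [Dx fx] [Dy fy] z /andP [xz zy].
  have Dz : D z by apply: (iD x y Dx Dy); rewrite xz zy.
  have fz : r <= f z.
    move: fx; rewrite /= in_itv /= andbT => fx.
    exact: le_trans fx (fmono _ _ Dx Dz xz).
  by split => //=; rewrite in_itv /= fz.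
apply: (eq_measurable_fun (cst c)); last exact: measurable_cst.
by move=> x; rewrite inE => /fc ->.
Qed.
End MonoMeas.
Theorem proposition7 (R : realType) (rho : probability R R)
  (rho_no_atoms : forall x : R, rho [set x] = 0%E)
  (mu : probability (R * R)%type R) (hmu : Pc_star mu) :
  in_Linfty rho (N_max rho mu).
Proof.
case: hmu => cpt hnl.
have [M [M0 [_ hN]]] := @supp_null R mu cpt.
pose K := 2 * M.
have K0 : 0 < K by rewrite mulr_gt0.
have F0 : forall th, S1 th -> forall u, u < - K -> cdf_radon mu th u = 0.
  by move=> th hth u hu; exact: (@radon_lo R mu M hN th u hth hu).
have F1 : forall th, S1 th -> forall u, K <= u -> cdf_radon mu th u = 1.
  by move=> th hth u hu; exact: (@radon_hi R mu M hN th u hth hu).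
have Fle1 : forall th u, cdf_radon mu th u <= 1 by move=> th u; exact: radon_le1.
have gK : forall th t, S1 th -> `|cdt_radon rho mu th t| <= K.
  move=> th t hth.
  rewrite /cdt_radon; exact: (@gen_inv_bound R (cdf_radon mu th) K (F0 th hth) (F1 th hth) (Fle1 th) K0 _ (@Fr_ge0 R rho t)).
pose D := [set t | Defs.cdf rho t < 1].
have mD : measurable D.
  have mFr : measurable_fun setT (Defs.cdf rho).
    exact: (nondecreasing_measurable measurableT (@Fr_mono R rho)).
  have := mFr measurableT `]-oo, 1[%classic (measurable_itv _); rewrite setTI.
  suff -> : D = Defs.cdf rho @^-1` `]-oo, 1[%classic by [].
  by apply/seteqP; split => t; rewrite /D /= in_itv.
have iD : is_interval D.
  move=> x y Dx Dy z /andP [xz zy]; rewrite /D /=.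
  exact: le_lt_trans (@Fr_mono R rho _ _ zy) Dy.
have goff : forall th t, ~ D t -> cdt_radon rho mu th t = 0.
  move=> th t nDt; rewrite /cdt_radon; apply: (@gen_inv_ge1 R _ (Fle1 th)).
  by rewrite leNgt; apply/negP.
have gmono : forall th, S1 th -> forall x y, D x -> D y -> x <= y ->
    cdt_radon rho mu th x <= cdt_radon rho mu th y.
  move=> th hth x y Dx Dy xy; rewrite /cdt_radon.
  apply: (@gen_inv_mono R _ K (F0 th hth) (F1 th hth)) => //.
    exact: Fr_ge0.
  exact: Fr_mono.
have gmeas : forall th, S1 th -> measurable_fun setT (cdt_radon rho mu th).
  move=> th hth; apply: (@mono_on_measurable R D _ 0 mD iD (gmono th hth)).
  by move=> t; exact: goff.
have th0 : S1 ((1 : R), (0 : R)) by rewrite /S1 /=; nra.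
have [p1 [p2 [p3 [s1 s2 s3 hdet]]]] := @three_points R _ hnl.
pose u := (p2.1 - p1.1, p2.2 - p1.2).
pose v := (p3.1 - p1.1, p3.2 - p1.2).
pose dd := `|u.1 * v.2 - u.2 * v.1|.
have dd0 : 0 < dd by rewrite normr_gt0.
pose SS := `|u.1| + `|u.2| + `|v.1| + `|v.2|.
have SS0 : 0 < SS.
  have hs := @sep R u v _ th0.
  have e1 : 0 <= SS by rewrite /SS !addr_ge0.
  have e2 : 0 <= `|dot2 u (1, 0)| + `|dot2 v (1, 0)| by rewrite addr_ge0.
  rewrite -/dd -/SS in hs.
  rewrite lt_def e1 andbT; apply/eqP => hSS.
  by move: hs; rewrite hSS mul0r leNgt dd0.
pose gam := dd / (2 * SS).
have gamE : gam * (2 * SS) = dd by rewrite /gam divfK // mulf_neq0 // gt_eqF.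
have gam0 : 0 < gam by rewrite /gam divr_gt0 // mulr_gt0.
pose r := gam / 8.
have r0 : 0 < r by rewrite /r divr_gt0.
have r8 : 8 * r = gam by rewrite /r mulrC divfK.
pose mm p := fine (mu (sq p r)).
have mmE : forall p, mu (sq p r) = (mm p)%:E.
  by move=> p; rewrite /mm fineK // fin_num_measure //; exact: meas_sq.
have mm0 : forall p, supp2 mu p -> 0 < mm p.
  by move=> p sp; rewrite -lte_fin -mmE; exact: sp r r0.
have mm1 : forall p, mm p <= 1.
  by move=> p; rewrite -lee_fin -mmE probability_le1 //; exact: meas_sq.
pose m := Num.min (mm p1) (Num.min (mm p2) (mm p3)).
have m0 : 0 < m by rewrite /m !lt_min !mm0.
have m1 : m <= 1 by rewrite /m ge_min mm1.
have mP1 : (m%:E <= mu (sq p1 r))%E by rewrite mmE lee_fin /m ge_min lexx.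
have mP2 : (m%:E <= mu (sq p2 r))%E by rewrite mmE lee_fin /m ge_min ge_min lexx orbT.
have mP3 : (m%:E <= mu (sq p3 r))%E by rewrite mmE lee_fin /m ge_min ge_min lexx !orbT.
have [q1 hq1] := @Fr_quantile R rho rho_no_atoms (m / 2) (ltac:(rewrite divr_gt0 //)) (ltac:(lra)).
have [q2 hq2] := @Fr_quantile R rho rho_no_atoms (1 - m / 2) (ltac:(lra)) (ltac:(lra)).
have [q3 hq3] := @Fr_quantile R rho rho_no_atoms (1 - m / 4) (ltac:(lra)) (ltac:(lra)).
pose G := `]-oo, q1]%classic : set R.
pose H := `]q2, q3]%classic : set R.
pose pp := m / 4.
have pp0 : 0 <= pp by rewrite /pp divr_ge0 // ltW.
have mG : measurable G by exact: measurable_itv.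
have mH : measurable H by exact: measurable_itv.
have pG : (pp%:E <= rho G)%E by rewrite /G FrE hq1 lee_fin /pp; lra.
have q23 : q2 < q3.
  rewrite ltNge; apply/negP => h; have := @Fr_mono R rho _ _ h.
  rewrite hq2 hq3; lra.
have pH : (pp%:E <= rho H)%E.
  have EU : `]-oo, q3]%classic = `]-oo, q2]%classic `|` H.
    apply/seteqP; split => t; rewrite /H /= !in_itv /=.
      by move=> tq3; case: (lerP t q2) => tq2; [left|right; apply/andP].

    by case => [tq2|/andP [_ ->]] //; exact: le_trans tq2 (ltW q23).
  have := @FrE R rho q3; rewrite EU measureU //; last first.
    apply/seteqP; split => // t [] /=; rewrite /H /= !in_itv /= => h1 /andP [h2 _].
    by have := lt_le_trans h2 h1; rewrite ltxx.
  move=> hE; change ((rho `]-oo, q2]%classic + rho H)%E = (Defs.cdf rho q3)%:E) in hE.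
  move: hE; rewrite FrE hq2 hq3.
  have hHf : rho H = (fine (rho H))%:E by rewrite fineK // fin_num_measure.
  rewrite hHf -EFinD => -[hh]; rewrite lee_fin /pp; lra.
have GFr : forall t, G t -> Defs.cdf rho t <= m / 2.
  by move=> t; rewrite /G /= in_itv /= => tq1; rewrite -hq1; exact: Fr_mono.
have HFr : forall t, H t -> 1 - m / 2 <= Defs.cdf rho t /\ Defs.cdf rho t < 1.
  move=> t; rewrite /H /= in_itv /= => /andP [h1 h2]; split.
    by rewrite -hq2; apply: Fr_mono; exact: ltW.
  apply: le_lt_trans (_ : Defs.cdf rho q3 < 1); first exact: Fr_mono.
  rewrite hq3; lra.
pose del := Num.sqrt ((2 * r) ^+ 2 * pp).
have del0 : 0 < del.
  rewrite /del sqrtr_gt0; apply: mulr_gt0; last by rewrite /pp divr_gt0.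
  by apply: exprn_gt0; rewrite mulr_gt0.
have stdK : forall th, S1 th -> del <= stdr rho (cdt_radon rho mu th).
  move=> th hth.
  have [P [Q [sP sQ hPQ]]] : exists P Q : R * R, [/\ (m%:E <= mu (sq P r))%E,
      (m%:E <= mu (sq Q r))%E & 8 * r <= dot2 Q th - dot2 P th].
    have hs := @sep R u v th hth; rewrite -/dd -/SS in hs.
    have Eu : dot2 u th = dot2 p2 th - dot2 p1 th by rewrite /dot2 /=; ring.
    have Ev : dot2 v th = dot2 p3 th - dot2 p1 th by rewrite /dot2 /=; ring.
    rewrite r8.
    have [hu|hu] := lerP gam `|dot2 u th|.
      have [du0|du0] := lerP 0 (dot2 u th).
        exists p1, p2; split => //; rewrite -Eu; move: hu; rewrite ger0_norm //.
      exists p2, p1; split => //; move: hu; rewrite ltr0_norm // Eu; lra.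
    have [hv|hv] := lerP gam `|dot2 v th|.
      have [dv0|dv0] := lerP 0 (dot2 v th).
        exists p1, p3; split => //; rewrite -Ev; move: hv; rewrite ger0_norm //.
      exists p3, p1; split => //; move: hv; rewrite ltr0_norm // Ev; lra.
    exfalso.
    have n1 := normr_ge0 (dot2 u th); have n2 := normr_ge0 (dot2 v th).
    move: hs; rewrite -gamE; nra.
  pose a := dot2 P th + 2 * r; pose b := dot2 Q th - 2 * r.
  have hab : a <= b by rewrite /a /b; lra.
  have hGa : forall t, G t -> cdt_radon rho mu th t <= a.
    move=> t Gt; rewrite /cdt_radon; apply: (@gen_inv_le R _ K (F0 th hth)).
      exact: Fr_ge0.
    have h1 := @radon_ge_sq R mu th P r m hth sP.
    have h2 := GFr t Gt.
    rewrite /a; clear -h1 h2 m0; lra.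
  have hHb : forall t, H t -> b <= cdt_radon rho mu th t.
    move=> t Ht; have [h1 h2] := HFr t Ht.
    rewrite /cdt_radon; apply: (@gen_inv_ge R _ K (F1 th hth)) => // w hw.
    have h3 := @radon_le_sq R mu th Q r m w hth sQ hw.
    clear -h1 h3 m0; lra.
  apply: le_trans (@std_lb R rho _ K a b pp G H (gmeas th hth) (fun t => gK th t hth)
    mG mH pG pH pp0 hab hGa hHb).
  apply: ler_wsqrtr; apply: ler_wpM2r => //.
  have e1 : 2 * r <= (b - a) / 2 by rewrite /a /b; lra.
  have e2 : 0 <= 2 * r by rewrite mulr_ge0 // ltW.
  nra.
pose C := (K + K) / del.
have Nb : forall th t, S1 th -> `|N_theta rho mu th t| <= C.
  move=> th t hth; rewrite /N_theta.
  have hs := stdK th hth.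
  set sd := stdr rho (cdt_radon rho mu th) in hs *.
  have sd0 : 0 < sd := lt_le_trans del0 hs.
  have hx : `|cdt_radon rho mu th t - meanr rho (cdt_radon rho mu th)| <= K + K.
    apply: le_trans (ler_normB _ _) _; apply: lerD; first exact: gK.
    by apply: mean_bound; [exact: gmeas|move=> w; exact: gK].
  rewrite normrM normfV (gtr0_norm sd0).
  apply: le_trans (ler_wpM2r _ hx) _; first by rewrite invr_ge0 ltW.
  apply: ler_wpM2l; first by rewrite addr_ge0 // ltW.
  by rewrite lef_pV2 ?posrE.
have Nmax_ub : forall t, (N_max rho mu t <= C%:E)%E.
  move=> t; rewrite /N_max; apply: ge_ereal_sup => _ [th hth <-].
  by rewrite lee_fin; exact: le_trans (ler_norm _) (Nb th t hth).
have Nmax_lb : forall t, ((- C)%:E <= N_max rho mu t)%E.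
  move=> t; apply: (@le_trans _ _ (N_theta rho mu (1, 0) t)%:E).
    by rewrite lee_fin; have := Nb _ t th0; rewrite ler_norml => /andP [].
  by apply: ereal_sup_ubound; exists (1, 0).
pose phi t := fine (N_max rho mu t).
have NE : forall t, N_max rho mu t = (phi t)%:E.
  move=> t; rewrite /phi fineK // fin_numElt.
  by rewrite (lt_le_trans (ltNyr _) (Nmax_lb t)) (le_lt_trans (Nmax_ub t) (ltry _)).
have phim : measurable_fun setT phi.
  pose c := fine (ereal_sup [set ((0 - meanr rho (cdt_radon rho mu th)) /
     stdr rho (cdt_radon rho mu th))%:E | th in @S1 R]).
  apply: (@mono_on_measurable R D phi c mD iD).
    move=> x y Dx Dy xy; rewrite -lee_fin -!NE /N_max.
    apply: ge_ereal_sup => _ [th hth <-].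
    apply: (@le_trans _ _ (N_theta rho mu th y)%:E).
      rewrite lee_fin /N_theta; apply: ler_wpM2r; first by rewrite invr_ge0 sqrtr_ge0.
      by rewrite lerD2r; exact: gmono.
    by apply: ereal_sup_ubound; exists th.
  move=> x nDx; rewrite /phi /c /N_max; congr (fine (ereal_sup _)).
  by apply: eq_imagel => th _; rewrite /N_theta goff.
split.
  apply: (eq_measurable_fun (EFin \o phi)).
    by move=> t _; rewrite /= NE.
  exact: measurableT_comp.
exists C; apply: aeW => t; rewrite NE abse_EFin lee_fin ler_norml.
have := Nmax_ub t; have := Nmax_lb t; rewrite !NE !lee_fin => -> ->.
by [].
Qed.
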